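(* For every profile $P$: $|\mathit{TC}(P)|=1$ if and only if all agents have pairwise distinct top choices. Analogously, $|\mathit{BC}(P)|=1$ if and only if all agents have pairwise distinct bottom choices.
   Context: Let $N=\{1,\dots,n\}$ be agents and $H$ a set of $n$ houses. A profile $P=(\succ_1,\dots,\succ_n)$ gives each agent a strict linear order on $H$; an agent's top (bottom) choice is the house she ranks first (last). An assignment is a bijection $N\to H$; $M$ is the set of assignments. Agent $x$ weakly prefers $\mu$ to $\lambda$ if $\mu(x)\succ_x\lambda(x)$ or $\mu(x)=\lambda(x)$. $N_{\mu,\lambda}$ is the set of agents weakly preferring $\mu$ to $\lambda$; $\mu\succsim\lambda$ if $|N_{\mu,\lambda}|\ge|N_{\lambda,\mu}|$, and $\succsim^*$ is its transitive closure. $\mathit{TC}(P)=\{\mu\in M:\mu\succsim^*\lambda\ \forall\lambda\in M\}$, $\mathit{BC}(P)=\{\mu\in M:\lambda\succsim^*\mu\ \forall\lambda\in M\}$. *)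

(* Defs.v *)
From mathcomp Require Import all_boot all_order.
Set Implicit Arguments. Unset Strict Implicit. Unset Printing Implicit Defensive.

(* Agents: finite type N; houses: finite type H with #|H| = #|N| (= n).
   A profile gives each agent x a relation [P x : rel H], where [P x a b]
   means "x strictly prefers a to b". *)
Definition strict_linear_order (H : finType) (r : rel H) : Prop :=
  irreflexive r /\ transitive r /\ (forall a b, a != b -> r a b || r b a).

Definition is_profile (N H : finType) (P : N -> rel H) : Prop :=
  forall x, strict_linear_order (P x).

Definition is_top (N H : finType) (P : N -> rel H) (x : N) (h : H) : Prop :=
  forall h', h' != h -> P x h h'.
Definition is_bottom (N H : finType) (P : N -> rel H) (x : N) (h : H) : Prop :=
  forall h', h' != h -> P x h' h.

Definition distinct_tops (N H : finType) (P : N -> rel H) : Prop :=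
  forall x y hx hy, is_top P x hx -> is_top P y hy -> x != y -> hx != hy.
Definition distinct_bottoms (N H : finType) (P : N -> rel H) : Prop :=
  forall x y hx hy, is_bottom P x hx -> is_bottom P y hy -> x != y -> hx != hy.

(* assignments: bijections N -> H (injective maps, since #|N| = #|H|) *)
Definition assignments (N H : finType) : {set {ffun N -> H}} :=
  [set mu : {ffun N -> H} | injectiveb mu].

Definition Nwp (N H : finType) (P : N -> rel H) (mu lam : {ffun N -> H}) : {set N} :=
  [set x | P x (mu x) (lam x) || (mu x == lam x)].

Definition pop_rel (N H : finType) (P : N -> rel H) : rel {ffun N -> H} :=
  fun mu lam => [&& mu \in assignments N H, lam \in assignments N H &
                    #|Nwp P lam mu| <= #|Nwp P mu lam|].

(* transitive closure ≿* (reflexive closure is harmless: ≿ is reflexive) *)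
Definition pop_star (N H : finType) (P : N -> rel H) : rel {ffun N -> H} :=
  connect (pop_rel P).

Definition TC (N H : finType) (P : N -> rel H) : {set {ffun N -> H}} :=
  [set mu in assignments N H |
     [forall lam in assignments N H, pop_star P mu lam]].

Definition BC (N H : finType) (P : N -> rel H) : {set {ffun N -> H}} :=
  [set mu in assignments N H |
     [forall lam in assignments N H, pop_star P lam mu]].

(* Main.v *)
Require Import Defs.
From mathcomp Require Import all_boot all_order.
From mathcomp Require Import fingroup perm.
Set Implicit Arguments. Unset Strict Implicit. Unset Printing Implicit Defensive.

Section S.
Variables (N H : finType) (P : N -> rel H).
Hypothesis eN : #|N| = #|H|.
Hypothesis prof : is_profile P.

Lemma asymP x a b : P x a b -> ~~ P x b a.
Proof.
case: (prof x) => irr [tr _] hab; apply/negP => hba.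
by have := tr _ _ _ hab hba; rewrite irr.
Qed.

Lemma top_exists x : exists h, [forall h', (h' != h) ==> P x h h'].
Proof.
have : 0 < #|H| by rewrite -eN; apply/card_gt0P; exists x.
case/card_gt0P => h0 _.
case: (prof x) => irr [tr tot].
pose m h := #|[set h' | P x h' h]|.
case: (arg_minnP m (isT : predT h0)) => h _ hmin.
exists h; apply/forallP => h'; apply/implyP => ne.
have := tot _ _ ne; case/orP => // hh'.
have : m h' < m h.
  apply: proper_card; apply/properP; split.
    by apply/subsetP => a; rewrite !inE => ha; apply: tr hh'.
  by exists h'; rewrite !inE ?irr.
by rewrite ltnNge hmin.
Qed.

Lemma TC_part : #|TC P| = 1 <-> distinct_tops P.
Proof.
split.
- move=> hTC x y hx hy tx ty xy; apply/negP => /eqP ehxy; subst hy.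
  have /cards1P [mu eTC] : #|TC P| == 1 by rewrite hTC.
  have : mu \in TC P by rewrite eTC set11.
  rewrite /TC inE => /andP [Amu /forall_inP Hmu].
  have injmu : injective mu by move: Amu; rewrite inE => /injectiveP.
  have : hx \in codom mu.
    by apply: inj_card_onto => //; rewrite eN.
  case/codomP => z ez.
  have [w [wtop wne]] : exists w, is_top P w hx /\ mu w != hx.
    case: (eqVneq (mu x) hx) => exh.
      exists y; split => //; apply/eqP => eyh.
      by move: xy; rewrite (injmu x y) ?eqxx // exh eyh.
    by exists x.
  have zw : z != w by apply/eqP => ezw; move: wne; rewrite -ezw -ez eqxx.
  pose mu' := [ffun v => mu (tperm w z v)].
  have Amu' : mu' \in assignments N H.
    rewrite inE; apply/injectiveP => a b; rewrite !ffunE => /injmu; apply: perm_inj.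
  have mu'w : mu' w = hx by rewrite ffunE tpermL.
  have edge : pop_rel P mu' mu.
    rewrite /pop_rel Amu Amu' /=.
    apply: (@leq_trans #|[set~ w]|).
      apply: subset_leq_card; apply/subsetP => v; rewrite !inE.
      apply: contraTneq => ->; rewrite mu'w (negbTE wne) orbF.
      by apply: asymP; apply: wtop.
    rewrite !cardsC1; apply: (@leq_trans #|[set~ z]|); first by rewrite cardsC1.
    apply: subset_leq_card; apply/subsetP => v; rewrite !inE => vz.
    case: (eqVneq v w) => [->|vw]; first by rewrite mu'w wtop.
    by rewrite ffunE tpermD 1?eq_sym // eqxx orbT.
  have : mu' \in TC P.
    rewrite /TC inE Amu' /=; apply/forall_inP => lam Alam.
    exact: connect_trans (connect1 edge) (Hmu _ Alam).
  rewrite eTC inE => /eqP emu.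
  by move: wne; rewrite -mu'w emu eqxx.
- move=> dt.
  pose f := [ffun x => xchoose (top_exists x)].
  have ftop x : is_top P x (f x).
    move=> h'; rewrite ffunE => ne.
    by have /forallP /(_ h') /implyP := xchooseP (top_exists x); apply.
  have Af : f \in assignments N H.
    rewrite inE; apply/injectiveP => a b eab; apply/eqP; apply: contraT => ab.
    by have := dt _ _ _ _ (ftop a) (ftop b) ab; rewrite eab eqxx.
  have NT a : Nwp P f a = setT.
    apply/setP => v; rewrite !inE; case: (eqVneq (f v) (a v)) => [|ne]; first by rewrite orbT.
    by rewrite ftop // eq_sym.
  have into a : pop_rel P a f -> a = f.
    rewrite /pop_rel NT cardsT => /and3P [_ _ hc].
    have : Nwp P a f == setT by rewrite eqEcard subsetT cardsT.
    move/eqP/setP => hs; apply/ffunP => v; move: (hs v); rewrite !inE.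
    case/orP => [hp|/eqP //].
    case: (eqVneq (a v) (f v)) => // ne.
    by have := asymP hp; rewrite ftop.
  apply/eqP/cards1P; exists f; apply/setP => mu; rewrite /TC inE in_set1.
  apply/idP/idP.
  + case/andP => Amu /forall_inP /(_ _ Af) /connectP [p pp lp].
    apply/eqP; elim: p mu pp lp {Amu} => [|b p IH] mu /=; first by move=> _ ->.
    by case/andP => e pb lp; have eb := IH _ pb lp; subst b; apply: into.
  + move/eqP => ->; rewrite Af /=; apply/forall_inP => lam Alam; apply: connect1.
    by rewrite /pop_rel Af Alam NT cardsT max_card.
Qed.

End S.

Lemma BC_dual (N H : finType) (P : N -> rel H) :
  BC P = TC (fun x a b => P x b a).
Proof.
apply/setP => mu; rewrite !inE; congr (_ && _); apply: eq_forallb => lam.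
congr (_ ==> _); rewrite /pop_star.
transitivity (connect [rel a b | pop_rel P b a] mu lam); first by rewrite connect_rev.
apply: eq_connect => a b /=.
rewrite /pop_rel andbCA; congr [&& _, _ & _ <= _]; congr #|pred_of_set _|; apply/setP => v;
by rewrite !inE eq_sym.
Qed.

Theorem lemmaB2 (N H : finType) (P : N -> rel H) :
  #|N| = #|H| -> is_profile P ->
  (#|TC P| = 1 <-> distinct_tops P) /\ (#|BC P| = 1 <-> distinct_bottoms P).
Proof.
move=> eN prof; split; first exact: TC_part.
rewrite BC_dual; apply: TC_part => // x; case: (prof x) => irr [tr tot]; split => //.
split; first by move=> a b c hba hcb; exact: tr hcb hba.
by move=> a b ab; rewrite orbC; apply: tot.
Qed.
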